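(* Let $\Gamma=(Q,A,E,(\delta_e)_{e\in E})$ be an MEMDP, $q\in Q$, and $W$ a parity objective. Then $$\mathrm{val}^{\mathrm{uni}}_q(\Gamma,W)=\inf_{b\in\mathcal D(E)}\mathrm{val}^{\mathrm{pr}}_q(\Gamma,b,W).$$
   Context: $\mathcal D(X)$ is the set of distributions on $X$ (countable support, summing to 1). An MDP $G=(Q,A,\delta)$ has finite non-empty $Q,A$ and $\delta:Q\times A\to\mathcal D(Q)$; strategies are maps $\sigma:Q\cdot(A\cdot Q)^*\to\mathcal D(A)$, $\mathrm{Strat}(Q,A)$ is their set, and $\mathbb P^\sigma_q[G,\cdot]$ is the induced probability measure on infinite runs from $q$ (infinite state sequences measured by projection). A parity objective given by $f:Q\to\mathbb N$ is the set of infinite state sequences whose maximal label seen infinitely often is even. An MEMDP is $\Gamma=(Q,A,E,(\delta_e)_{e\in E})$ with $E$ finite non-empty and each $\Gamma[e]=(Q,A,\delta_e)$ an MDP. $\mathrm{val}^{\mathrm{uni}}_q(\Gamma,W)=\sup_\sigma\min_{e\in E}\mathbb P^\sigma_q[\Gamma[e],W]$; $\mathrm{val}^{\mathrm{pr}}_q(\Gamma,b,W)=\sup_\sigma\sum_{e\in E}b(e)\,\mathbb P^\sigma_q[\Gamma[e],W]$. *)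

(* Defs.v *)
From HB Require Import structures.
From mathcomp Require Import all_boot all_order all_algebra.
From mathcomp Require Import all_classical all_reals.
From mathcomp Require Import ereal sequences.

Set Implicit Arguments.
Unset Strict Implicit.
Unset Printing Implicit Defensive.

Import Order.TTheory GRing.Theory Num.Theory.
Local Open Scope ring_scope.
Local Open Scope classical_set_scope.

Section MEMDP.
Variable R : realType.

(* D(X) for a finite type X: nonnegative weights summing to 1
   (every distribution on a finite set has this form). *)
Record distr (X : finType) := Distr {
  pmf :> X -> R;
  pmf_ge0 : forall x, 0 <= pmf x;
  pmf_sum1 : \sum_(x : X) pmf x = 1 }.

Variables (Q A : finType).

Definition mdp := Q -> A -> distr Q.

(* A history q0 a0 q1 ... a_{n-1} q_n in Q (A Q)^* is represented as the
   pair (q0, [:: (a0,q1); ...; (a_{n-1},q_n)]). *)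
Definition history := (Q * seq (A * Q))%type.

Definition strategy := history -> distr A.

Fixpoint hprob (delta : mdp) (sigma : strategy) (q0 : Q)
  (pre : seq (A * Q)) (cur : Q) (t : seq (A * Q)) : R :=
  match t with
  | [::] => 1
  | (a, q') :: t' =>
      sigma (q0, pre) a * delta cur a q' *
      hprob delta sigma q0 (rcons pre (a, q')) q' t'
  end.

Definition cyl_prob (delta : mdp) (sigma : strategy) (q : Q) (h : history) : R :=
  (h.1 == q)%:R * hprob delta sigma h.1 [::] h.1 h.2.

(* Infinite plays q0 a0 q1 a1 ...: rho i = (q_i, a_i). *)
Definition play := nat -> (Q * A)%type.

Definition cyl (h : history) : set play :=
  [set rho | (rho 0%N).1 = h.1 /\
             [seq ((rho i).2, (rho i.+1).1) | i <- iota 0 (size h.2)] = h.2].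

(* The probability measure P^sigma_q on plays, given by the Caratheodory
   outer measure generated by the cylinder probabilities (it coincides with
   the unique induced probability measure on all measurable sets). *)
Definition play_prob (delta : mdp) (sigma : strategy) (q : Q) (S : set play)
  : \bar R :=
  ereal_inf [set (\sum_(k <oo) (cyl_prob delta sigma q (F k))%:E)%E
            | F in [set F : nat -> history | S `<=` \bigcup_k cyl (F k)]].

Definition states (rho : play) : nat -> Q := fun i => (rho i).1.

Definition Prob (delta : mdp) (sigma : strategy) (q : Q) (W : set (nat -> Q))
  : \bar R := play_prob delta sigma q (states @^-1` W).

Definition inf_often_label (f : Q -> nat) (w : nat -> Q) (m : nat) : Prop :=
  forall N, exists2 i, (N <= i)%N & f (w i) = m.

Definition parity (f : Q -> nat) : set (nat -> Q) :=
  [set w | exists m, [/\ inf_often_label f w m,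
                          (forall m', inf_often_label f w m' -> (m' <= m)%N)
                        & ~~ odd m]].

Variable E : finType.
Definition memdp := E -> mdp.

Definition val_uni (G : memdp) (q : Q) (W : set (nat -> Q)) : \bar R :=
  ereal_sup [set ereal_inf [set Prob (G e) sigma q W | e in [set: E]]
            | sigma in [set: strategy]].

Definition val_pr (G : memdp) (b : distr E) (q : Q) (W : set (nat -> Q))
  : \bar R :=
  ereal_sup [set (\sum_(e : E) (b e)%:E * Prob (G e) sigma q W)%E
            | sigma in [set: strategy]].

End MEMDP.

(* Main.v *)
Require Import Defs.
From HB Require Import structures.
From mathcomp Require Import all_boot all_order all_algebra.
From mathcomp Require Import all_classical all_reals.
From mathcomp Require Import ereal sequences.
From mathcomp Require Import ring lra.
Set Implicit Arguments.
Unset Strict Implicit.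
Unset Printing Implicit Defensive.
Import Order.TTheory GRing.Theory Num.Theory.
Local Open Scope classical_set_scope.
Local Open Scope ereal_scope.

Section Aux.
Local Open Scope ring_scope.
Variables (R : realType) (Q A : finType).

Fixpoint wprob (sigma : strategy R Q A) (q0 : Q) (pre : seq (A * Q))
  (t : seq (A * Q)) : R :=
  match t with
  | [::] => 1
  | (a, q') :: t' => sigma (q0, pre) a * wprob sigma q0 (rcons pre (a, q')) t'
  end.

Fixpoint dprob (delta : mdp R Q A) (cur : Q) (t : seq (A * Q)) : R :=
  match t with
  | [::] => 1
  | (a, q') :: t' => delta cur a q' * dprob delta q' t'
  end.

Lemma hprobE delta sigma q0 pre cur t :
  hprob delta sigma q0 pre cur t = wprob sigma q0 pre t * dprob delta cur t.
Proof.
elim: t pre cur => [|[a q'] t IH] pre cur /=; first by rewrite mulr1.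
by rewrite IH; ring.
Qed.

Lemma wprob_ge0 sigma q0 pre t : 0 <= wprob sigma q0 pre t.
Proof.
elim: t pre => [|[a q'] t IH] pre /=; first exact: ler01.
by rewrite mulr_ge0 // pmf_ge0.
Qed.

Lemma dprob_ge0 delta cur t : 0 <= dprob delta cur t.
Proof.
elim: t cur => [|[a q'] t IH] cur /=; first exact: ler01.
by rewrite mulr_ge0 // pmf_ge0.
Qed.

Lemma cyl_prob_ge0 (delta : mdp R Q A) (sigma : strategy R Q A) (q : Q) (h : history Q A) : 0 <= cyl_prob delta sigma q h.
Proof.
by rewrite /cyl_prob hprobE !mulr_ge0 ?wprob_ge0 ?dprob_ge0.
Qed.

Lemma wprob_cat sigma q0 p s t :
  wprob sigma q0 p (s ++ t) = wprob sigma q0 p s * wprob sigma q0 (p ++ s) t.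
Proof.
elim: s p => [|[a q'] s IH] p /=; first by rewrite mul1r cats0.
by rewrite IH -cats1 -catA /=; ring.
Qed.

Lemma wprob_rcons sigma q0 pre x :
  wprob sigma q0 [::] (rcons pre x) = wprob sigma q0 [::] pre * sigma (q0, pre) x.1.
Proof.
rewrite -cats1 wprob_cat /=; case: x => a q' /=; by rewrite mulr1.
Qed.

End Aux.

Section Mix.
Local Open Scope ring_scope.
Variables (R : realType) (Q A : finType).
Variables (l : R) (hl0 : 0 <= l) (hl1 : l <= 1).
Variables (s1 s2 : strategy R Q A).

Definition w1 (h : history Q A) := l * wprob s1 h.1 [::] h.2.
Definition w2 (h : history Q A) := (1 - l) * wprob s2 h.1 [::] h.2.

Definition mixpmf (h : history Q A) (a : A) : R :=
  if 0 < w1 h + w2 h then (w1 h * s1 h a + w2 h * s2 h a) / (w1 h + w2 h)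
  else s1 h a.

Lemma w1_ge0 h : 0 <= w1 h.
Proof. by rewrite /w1 mulr_ge0 // wprob_ge0. Qed.
Lemma w2_ge0 h : 0 <= w2 h.
Proof. by rewrite /w2 mulr_ge0 ?wprob_ge0 // subr_ge0. Qed.

Lemma mixpmf_ge0 h a : 0 <= mixpmf h a.
Proof.
rewrite /mixpmf; case: ifP => [hp|_]; last exact: pmf_ge0.
apply: divr_ge0; last exact: ltW.
by rewrite addr_ge0 // mulr_ge0 ?w1_ge0 ?w2_ge0 ?pmf_ge0.
Qed.

Lemma mixpmf_sum1 h : \sum_a mixpmf h a = 1.
Proof.
have [hp|hn] := boolP (0 < w1 h + w2 h); last first.
  by under eq_bigr => a _ do rewrite /mixpmf (negbTE hn); exact: pmf_sum1.
under eq_bigr => a _ do rewrite /mixpmf hp.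
rewrite -mulr_suml big_split /= -!mulr_sumr !pmf_sum1 !mulr1 divff //.
by rewrite gt_eqF.
Qed.

Definition mixs : strategy R Q A :=
  fun h => @Distr R A (mixpmf h) (mixpmf_ge0 h) (mixpmf_sum1 h).

Lemma mixs_wprob q0 pre :
  wprob mixs q0 [::] pre = l * wprob s1 q0 [::] pre + (1 - l) * wprob s2 q0 [::] pre.
Proof.
elim/last_ind: pre => [|pre x IH] /=; first by ring.
rewrite !wprob_rcons IH /= /mixpmf.
have -> : w1 (q0, pre) + w2 (q0, pre) =
  l * wprob s1 q0 [::] pre + (1 - l) * wprob s2 q0 [::] pre by [].
case: ifP => [hp|hn].
  rewrite mulrC divfK ?gt_eqF // /w1 /w2 /=; ring.
have h0 : l * wprob s1 q0 [::] pre + (1 - l) * wprob s2 q0 [::] pre = 0.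
  apply/eqP; rewrite eq_le; apply/andP; split; last first.
    by rewrite addr_ge0 // mulr_ge0 ?wprob_ge0 ?subr_ge0.
  by rewrite leNgt hn.
have e1 : l * wprob s1 q0 [::] pre = 0.
  apply/eqP; rewrite eq_le; apply/andP; split; last by rewrite mulr_ge0 ?wprob_ge0.
  rewrite -h0 lerDl mulr_ge0 ?wprob_ge0 ?subr_ge0 //.
have e2 : (1 - l) * wprob s2 q0 [::] pre = 0 by move: h0; rewrite e1 add0r.
rewrite h0 mul0r !mulrA e1 e2; ring.
Qed.

Lemma mixs_cyl (delta : mdp R Q A) q (h : history Q A) :
  cyl_prob delta mixs q h =
  l * cyl_prob delta s1 q h + (1 - l) * cyl_prob delta s2 q h.
Proof.
rewrite /cyl_prob !hprobE mixs_wprob; ring.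
Qed.

Local Open Scope ereal_scope.

Lemma mixs_Prob (delta : mdp R Q A) q W :
  l%:E * Prob delta s1 q W + (1 - l)%:E * Prob delta s2 q W <=
  Prob delta mixs q W.
Proof.
rewrite /Prob /play_prob; apply: le_ereal_inf_tmp => y [F HF <-].
rewrite (eq_eseriesr (g := fun k => l%:E * (cyl_prob delta s1 q (F k))%:E +
   (1 - l)%:E * (cyl_prob delta s2 q (F k))%:E)); last first.
  by move=> k _; rewrite mixs_cyl EFinD !EFinM.
rewrite nneseriesD; last 2 first.
- by move=> k _ _; rewrite -EFinM lee_fin mulr_ge0 // cyl_prob_ge0.
- by move=> k _ _; rewrite -EFinM lee_fin mulr_ge0 ?cyl_prob_ge0 // subr_ge0.
rewrite nneseriesZl; last by move=> k _; rewrite lee_fin cyl_prob_ge0.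
rewrite nneseriesZl; last by move=> k _; rewrite lee_fin cyl_prob_ge0.
apply: leeD; apply: lee_wpmul2l; rewrite ?lee_fin ?subr_ge0 //;
  apply: ereal_inf_lbound; by exists F.
Qed.

End Mix.

Section Bounds.
Local Open Scope ring_scope.
Variables (R : realType) (Q A : finType).
Local Open Scope ereal_scope.

Lemma Prob_ge0 (delta : mdp R Q A) (sigma : strategy R Q A) (q : Q) W :
  0 <= Prob delta sigma q W.
Proof.
rewrite /Prob /play_prob; apply: le_ereal_inf_tmp => y [F _ <-].
by apply: nneseries_ge0 => k _ _; rewrite lee_fin cyl_prob_ge0.
Qed.

Lemma Prob_le1 (delta : mdp R Q A) (sigma : strategy R Q A) (q r : Q) W :
  r != q -> Prob delta sigma q W <= 1.
Proof.
move=> hr.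
pose F := fun k : nat => match k with
  | 0%N => (q, [::]) : history Q A
  | k'.+1 => let x := nth r (enum Q) k' in
      if x == q then (r, [::]) else (x, [::]) end.
have HF : (@states Q A @^-1` W) `<=` \bigcup_k cyl (F k).
  move=> rho _.
  have [hx|hx] := eqVneq (rho 0%N).1 q.
    by exists 0%N => //; rewrite /cyl /= hx.
  exists (index (rho 0%N).1 (enum Q)).+1 => //.
  rewrite /cyl /= nth_index ?mem_enum // (negbTE hx) /=; by split.
apply: (@le_trans _ _ (\sum_(k <oo) (cyl_prob delta sigma q (F k))%:E)).
  by apply: ereal_inf_lbound; exists F.
rewrite (nneseries_split 0 1); last by move=> k _; rewrite lee_fin cyl_prob_ge0.
rewrite big_nat1 eseries0 ?adde0.
  by rewrite /cyl_prob /= eqxx mulr1.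
move=> i /= hi _; case: i hi => [//|i] _.
rewrite /cyl_prob /=; case: ifP => /= [_|hn].
  by rewrite (negbTE hr) mul0r.
by rewrite hn mul0r.
Qed.

Lemma dprob_single (delta : mdp R Q A) (q : Q) (hq : forall x : Q, x = q) cur t :
  dprob delta cur t = 1%R.
Proof.
elim: t cur => [//|[a q'] t IH] cur /=; rewrite IH mulr1.
have := pmf_sum1 (delta cur a).
rewrite (eq_bigl (pred1 q')) ?big_pred1_eq // => x /=.
by rewrite (hq x) (hq q') eqxx.
Qed.

Lemma cyl_single (d1 d2 : mdp R Q A) (sigma : strategy R Q A) (q : Q)
  (hq : forall x : Q, x = q) :
  cyl_prob d1 sigma q = cyl_prob d2 sigma q.
Proof.
apply: funext => h; by rewrite /cyl_prob !hprobE !(dprob_single _ hq).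
Qed.

Lemma Prob_single (d1 d2 : mdp R Q A) (sigma : strategy R Q A) (q : Q) W
  (hq : forall x : Q, x = q) :
  Prob d1 sigma q W = Prob d2 sigma q W.
Proof. by rewrite /Prob /play_prob (cyl_single d1 d2 sigma hq). Qed.

End Bounds.

Section Regret.
Local Open Scope ring_scope.
Variables (R : realType) (E : finType) (e0 : E) (S : Type).
Variable x : S -> E -> R.
Hypothesis hx0 : forall s e, 0 <= x s e.
Hypothesis hx1 : forall s e, x s e <= 1.
Variables (v eps : R) (br : distr R E -> S).
Hypothesis hbr : forall b : distr R E, v - eps <= \sum_e b e * x (br b) e.
Hypothesis hmix : forall l, 0 <= l -> l <= 1 -> forall s1 s2, exists s,
  forall e, l * x s1 e + (1 - l) * x s2 e <= x s e.
Hypothesis heps : 0 < eps.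

Definition mx0 (a : R) := if 0 <= a then a else 0.
Definition pos (r : E -> R) e := mx0 (r e).
Definition Ssum (r : E -> R) := \sum_e pos r e.

Lemma pos_ge0 r e : 0 <= pos r e.
Proof. by rewrite /pos /mx0; case: ifP => // /negbT; rewrite -ltNge => /ltW. Qed.

Lemma Ssum_ge0 r : 0 <= Ssum r.
Proof. by apply: sumr_ge0 => e _; exact: pos_ge0. Qed.

Lemma cardE_gt0 : (0 < #|E|)%N.
Proof. by apply/card_gt0P; exists e0. Qed.

Definition bpmf (r : E -> R) (e : E) : R :=
  if 0 < Ssum r then pos r e / Ssum r else (#|E|%:R)^-1.

Lemma bpmf_ge0 r e : 0 <= bpmf r e.
Proof.
rewrite /bpmf; case: ifP => h.
  by rewrite divr_ge0 ?pos_ge0 // ltW.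
by rewrite invr_ge0 ler0n.
Qed.

Lemma bpmf_sum1 r : \sum_e bpmf r e = 1.
Proof.
rewrite /bpmf; have [h|h] := boolP (0 < Ssum r).
  by rewrite -mulr_suml divff // gt_eqF.
rewrite sumr_const cardT -cardE -(mulr_natr (#|E|%:R^-1)) mulVf // pnatr_eq0 -lt0n; exact: cardE_gt0.
Qed.

Definition bof r : distr R E := @Distr R E (bpmf r) (bpmf_ge0 r) (bpmf_sum1 r).

Definition uval (r : E -> R) := \sum_e bof r e * x (br (bof r)) e.

Definition step (r : E -> R) : E -> R :=
  fun e => r e + (uval r - x (br (bof r)) e).

Definition rr (t : nat) : E -> R := iter t step (fun _ => 0).
Definition sig (t : nat) := br (bof (rr t)).

Lemma rrE t e : rr t e = \sum_(i < t) (uval (rr i) - x (sig i) e).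
Proof.
elim: t => [|t IH]; first by rewrite big_ord0.
by rewrite big_ord_recr /= -IH.
Qed.

Lemma uval_ge0 r : 0 <= uval r.
Proof. by apply: sumr_ge0 => e _; rewrite mulr_ge0 ?pmf_ge0. Qed.

Lemma uval_le1 r : uval r <= 1.
Proof.
rewrite /uval -(pmf_sum1 (bof r)); apply: ler_sum => e _.
by rewrite ler_piMr ?pmf_ge0.
Qed.

Definition Phi (r : E -> R) := \sum_e (pos r e) ^+ 2.

Lemma pos_step_sq (a g : R) : (mx0 (a + g)) ^+ 2 <= (mx0 a + g) ^+ 2.
Proof.
rewrite /mx0; case: ifP => h1; case: ifP => h2.
- by [].
- move/negbT: h2; rewrite -ltNge => h2; nra.
- by rewrite expr0n /= sqr_ge0.
- by rewrite expr0n /= sqr_ge0.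
Qed.

Lemma cross0 r : \sum_e pos r e * (uval r - x (br (bof r)) e) = 0.
Proof.
set s := br (bof r).
have [h|h] := boolP (0 < Ssum r); last first.
  have h0 : Ssum r = 0.
    by apply/eqP; rewrite eq_le leNgt h Ssum_ge0.
  apply: big1 => e _.
  by rewrite (psumr_eq0P (fun i _ => pos_ge0 r i) h0) // mul0r.
have hu : uval r = (\sum_e pos r e * x s e) / Ssum r.
  rewrite /uval /= /bpmf h mulr_suml; apply: eq_bigr => e _; rewrite /s; ring.
under eq_bigr => e _ do rewrite mulrBr.
by rewrite sumrB -mulr_suml -/(Ssum r) hu mulrC divfK ?gt_eqF // subrr.
Qed.

Lemma Phi_step r : Phi (step r) <= Phi r + #|E|%:R.
Proof.
set s := br (bof r).
apply: (@le_trans _ _ (\sum_e (pos r e + (uval r - x s e)) ^+ 2)).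
  by apply: ler_sum => e _; exact: pos_step_sq.
under eq_bigr => e _ do rewrite sqrrD.
rewrite big_split big_split /= sumrMnl /s cross0 mul0rn addr0 lerD2l.
apply: (@le_trans _ _ (\sum_(e : E) 1)).
  apply: ler_sum => e _.
  have := uval_ge0 r; have := uval_le1 r; have := hx0 (br (bof r)) e.
  have := hx1 (br (bof r)) e; move=> *; nra.
by rewrite sumr_const cardT -cardE.
Qed.

Lemma Phi_rr t : Phi (rr t) <= #|E|%:R * t%:R.
Proof.
elim: t => [|t IH].
  rewrite mulr0 /Phi big1 // => e _; by rewrite /pos /rr /= /mx0 lexx expr0n.
rewrite (@le_trans _ _ (Phi (rr t) + #|E|%:R)) //; first exact: Phi_step.
by rewrite -natr1 mulrDr mulr1 lerD2r.
Qed.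

Lemma rr_le t e : #|E|%:R <= eps ^+ 2 * t%:R -> rr t e <= eps * t%:R.
Proof.
move=> hn.
have hp : pos (rr t) e ^+ 2 <= #|E|%:R * t%:R.
  apply: le_trans (Phi_rr t); rewrite /Phi (bigD1 e) //= lerDl.
  by apply: sumr_ge0 => i _; rewrite sqr_ge0.
have ht : 0 <= (t%:R : R) by rewrite ler0n.
have h2 : #|E|%:R * t%:R <= eps ^+ 2 * t%:R * t%:R by rewrite ler_wpM2r.
have hp0 := pos_ge0 (rr t) e.
have hle : rr t e <= pos (rr t) e.
  by rewrite /pos /mx0; case: ifP => // /negbT; rewrite -ltNge => /ltW.
apply: le_trans hle _.
rewrite leNgt; apply/negP => hlt.
have h0 : 0 <= eps * t%:R by apply: mulr_ge0 => //; exact: ltW.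
have : 0 < (pos (rr t) e - eps * t%:R) * (pos (rr t) e + eps * t%:R).
  apply: mulr_gt0; first by rewrite subr_gt0.
  apply: (lt_le_trans (le_lt_trans h0 hlt)); by rewrite lerDl.
move: h2 hp; nra.
Qed.

Lemma avg_ex T : exists s, forall e,
  \sum_(i < T.+1) x (sig i) e <= T.+1%:R * x s e.
Proof.
elim: T => [|T [s IH]].
  by exists (sig 0); move=> e; rewrite big_ord1 mul1r.
set n1 : R := T.+1%:R.
have hn1 : 0 < n1 by rewrite ltr0n.
have hn2 : 0 < n1 + 1 by rewrite addr_gt0.
have hl0 : 0 <= n1 / (n1 + 1) by rewrite divr_ge0 ?ltW.
have hl1 : n1 / (n1 + 1) <= 1 by rewrite ler_pdivrMr // mul1r lerDl.
have [s' Hs'] := hmix hl0 hl1 s (sig T.+1).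
exists s' => e; rewrite big_ord_recr /=.
have -> : (T.+2%:R : R) = n1 + 1 by rewrite /n1 -natr1.
apply: (@le_trans _ _ ((n1 + 1) * (n1 / (n1 + 1) * x s e +
   (1 - n1 / (n1 + 1)) * x (sig T.+1) e))); last first.
  by rewrite ler_wpM2l // ltW.
have -> : (n1 + 1) * (n1 / (n1 + 1) * x s e + (1 - n1 / (n1 + 1)) * x (sig T.+1) e)
  = n1 * x s e + x (sig T.+1) e.
  by field; rewrite gt_eqF.
by rewrite lerD2r IH.
Qed.

Lemma regret_main : exists s, forall e, v - eps *+ 2 <= x s e.
Proof.
set K := Num.Def.truncn (#|E|%:R / eps ^+ 2).
have hK := truncnS_gt (#|E|%:R / eps ^+ 2); rewrite -/K in hK.
have he2 : 0 < eps ^+ 2 by rewrite exprn_gt0.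
have hT : #|E|%:R <= eps ^+ 2 * K.+1%:R.
  by rewrite mulrC -ler_pdivrMr // ltW.
have [s Hs] := avg_ex K.
exists s => e.
have hsum := rrE K.+1 e.
rewrite sumrB in hsum.
have hu : K.+1%:R * (v - eps) <= \sum_(i < K.+1) uval (rr i).
  have <- : \sum_(i < K.+1) (v - eps) = K.+1%:R * (v - eps).
    by rewrite sumr_const card_ord mulr_natl.
  by apply: ler_sum => i _; exact: hbr.
have hr := rr_le e hT.
have hT0 : (0 : R) < K.+1%:R by rewrite ltr0n.
rewrite -(ler_pM2l hT0); apply: le_trans (Hs e).
have -> : \sum_(i < K.+1) x (sig i) e = \sum_(i < K.+1) uval (rr i) - rr K.+1 e.
  by rewrite hsum; ring.
move: hu hr; rewrite mulr2n; lra.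
Qed.

End Regret.

Unset Implicit Arguments.

Theorem mainTheorem5 (R : realType) (Q A E : finType)
  (a0 : A) (e0 : E) (G : memdp R Q A E) (q : Q) (f : Q -> nat) :
  val_uni G q (parity f) =
  ereal_inf [set val_pr G b q (parity f) | b in [set: distr R E]].
Proof.
set W := parity f.
pose sig0 : strategy R Q A := fun _ => bof a0 (fun _ => 0%R).
pose b0 : distr R E := bof e0 (fun _ => 0%R).
have sumb1 : forall b : distr R E, (\sum_(e : E) (b e)%:E) = 1.
  by move=> b; rewrite sumEFin pmf_sum1.
have distr_const : forall (b : distr R E) (m : \bar R), 0 <= m ->
    \sum_(e : E) (b e)%:E * m = m.
  move=> b m hm; rewrite -ge0_sume_distrl ?sumb1 ?mul1e //.
  by move=> e _; rewrite lee_fin pmf_ge0.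
apply/eqP; rewrite eq_le; apply/andP; split.
  apply: le_ereal_inf_tmp => _ [b _ <-].
  apply: ge_ereal_sup => _ [s _ <-].
  apply: (@le_trans _ _ (\sum_(e : E) (b e)%:E * Prob (G e) s q W)); last first.
    by apply: ereal_sup_ubound; exists s.
  set m := ereal_inf _.
  have hm : 0 <= m.
    apply: le_ereal_inf_tmp => _ [e _ <-]; exact: Prob_ge0.
  rewrite -{1}(distr_const b m hm); apply: lee_sum => e _.
  apply: lee_wpmul2l; first by rewrite lee_fin pmf_ge0.
  by apply: ereal_inf_lbound; exists e.
have [[r hr]|nr] := pselect (exists r : Q, r != q); last first.
  have hq : forall x : Q, x = q.
    by move=> x; apply/eqP; apply: contrapT => hx; apply: nr; exists x; apply/negP.
  apply: (@le_trans _ _ (val_pr G b0 q W)).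
    by apply: ereal_inf_lbound; exists b0.
  apply: ge_ereal_sup => _ [s _ <-].
  rewrite (eq_bigr (fun e => (b0 e)%:E * Prob (G e0) s q W)); last first.
    by move=> e _; rewrite (Prob_single (G e) (G e0) s W hq).
  rewrite distr_const; last exact: Prob_ge0.
  apply: (@le_trans _ _ (ereal_inf [set Prob (G e) s q W | e in [set: E]])).
    apply: le_ereal_inf_tmp => _ [e _ <-].
    by rewrite (Prob_single (G e) (G e0) s W hq).
  by apply: ereal_sup_ubound; exists s.
pose xx (s : strategy R Q A) (e : E) : R := fine (Prob (G e) s q W).
have hP : forall s e, Prob (G e) s q W = (xx s e)%:E.
  move=> s e; rewrite /xx fineK // ge0_fin_numE ?Prob_ge0 //.
  by apply: le_lt_trans (Prob_le1 _ _ _ hr) _; rewrite ltry.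
have hx0 : forall s e, (0 <= xx s e)%R.
  by move=> s e; rewrite -lee_fin -hP Prob_ge0.
have hx1 : forall s e, (xx s e <= 1)%R.
  by move=> s e; rewrite -lee_fin -hP (Prob_le1 _ _ _ hr).
have hsum : forall (b : distr R E) s,
    \sum_(e : E) (b e)%:E * Prob (G e) s q W = (\sum_e b e * xx s e)%R%:E.
  by move=> b s; rewrite -sumEFin; apply: eq_bigr => e _; rewrite hP EFinM.
set V := ereal_inf _.
have hV0 : 0 <= V.
  apply: le_ereal_inf_tmp => _ [b _ <-].
  apply: (@le_trans _ _ (\sum_(e : E) (b e)%:E * Prob (G e) sig0 q W)).
    by apply: sume_ge0 => e _; apply: mule_ge0; rewrite ?lee_fin ?pmf_ge0 ?Prob_ge0.
  by apply: ereal_sup_ubound; exists sig0.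
have hV1 : V <= 1.
  apply: (@le_trans _ _ (val_pr G b0 q W)).
    by apply: ereal_inf_lbound; exists b0.
  apply: ge_ereal_sup => _ [s _ <-]; rewrite hsum lee_fin -(pmf_sum1 b0).
  by apply: ler_sum => e _; rewrite ler_piMr ?pmf_ge0.
have hVf : V = (fine V)%:E.
  by rewrite fineK // ge0_fin_numE // (le_lt_trans hV1) // ltry.
set v := fine V.
rewrite hVf; apply/lee_addgt0Pr => eps heps.
have heps2 : (0 < eps / 2)%R by rewrite divr_gt0.
have hbr : forall b : distr R E, exists s,
    (v - eps / 2 <= \sum_e b e * xx s e)%R.
  move=> b.
  have : (v - eps / 2)%:E < val_pr G b q W.
    apply: (@lt_le_trans _ _ V); last by apply: ereal_inf_lbound; exists b.
    by rewrite hVf lte_fin ltrBlDr ltrDl.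
  move=> /ereal_sup_gt [_ [s _ <-]]; rewrite hsum lte_fin => h.
  by exists s; exact: ltW.
pose br := fun b => proj1_sig (cid (hbr b)).
have hbr' : forall b : distr R E, (v - eps / 2 <= \sum_e b e * xx (br b) e)%R.
  by move=> b; rewrite /br; case: (cid (hbr b)).
have hmix : forall l : R, (0 <= l)%R -> (l <= 1)%R -> forall s1 s2, exists s,
    forall e, (l * xx s1 e + (1 - l) * xx s2 e <= xx s e)%R.
  move=> l hl0 hl1 s1 s2; exists (mixs hl0 hl1 s1 s2) => e.
  have := mixs_Prob hl0 hl1 s1 s2 (G e) q W.
  by rewrite !hP -!EFinM -EFinD lee_fin.
have [s Hs] := @regret_main R E e0 (strategy R Q A) xx hx0 hx1 v (eps / 2)
  br hbr' hmix heps2.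
have hle : (v - eps)%:E <= val_uni G q W.
  apply: (@le_trans _ _ (ereal_inf [set Prob (G e) s q W | e in [set: E]])).
    apply: le_ereal_inf_tmp => _ [e _ <-]; rewrite hP lee_fin.
    by have := Hs e; rewrite mulr2n; lra.
  by apply: ereal_sup_ubound; exists s.
have -> : v%:E = (v - eps)%:E + eps%:E by rewrite -EFinD subrK.
by apply: leeD.
Qed.
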